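(* Let $h$ be a binary function symbol interpreted as associative and idempotent, and let $a,b$ be distinct free constants. Let $t$ be a term of the form $h(t_1,t_2)$ or $h(t_2,t_1)$, where $t_1\in\{a,b\}$ and $t_2$ is an arbitrary term. Then $t$ is not an $AI$-generalization of $h(a,b)$ and $h(b,a)$, i.e. $t\notin \mathcal{G}_{AI}(h(a,b),h(b,a))$.
   Context: Terms are built from a countable set of variables and a set of function symbols with fixed arities; substitutions map variables to terms, are the identity on all but finitely many variables, and are extended homomorphically to terms (written postfix, $t\sigma$). $AI$ denotes the equational theory generated by $h(x,h(y,z)) = h(h(x,y),z)$ and $h(x,x)=x$ (all other symbols free), and $s\approx_{AI} t$ means $s=t$ holds in every model of these axioms. A term $r$ is an $AI$-generalization of terms $s$ and $t$ if there exist substitutions $\sigma,\tau$ with $r\sigma\approx_{AI} s$ and $r\tau\approx_{AI} t$; $\mathcal{G}_{AI}(s,t)$ is the set of all such $r$. *)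

(* Defs.v *)
From Stdlib Require Import List.
Import ListNotations.

Section Terms.
Variable F : Type.
Variable ar : F -> nat.

Inductive term : Type :=
| Var : nat -> term
| Fn : F -> list term -> term.

Fixpoint wf (t : term) : Prop :=
  match t with
  | Var _ => True
  | Fn f ts => length ts = ar f /\
      (fix wfl (l : list term) : Prop :=
         match l with [] => True | u :: l' => wf u /\ wfl l' end) ts
  end.

Definition substitution (s : nat -> term) : Prop :=
  (forall x, wf (s x)) /\
  exists dom : list nat, forall x, ~ In x dom -> s x = Var x.

Fixpoint apply_subst (s : nat -> term) (t : term) : term :=
  match t with
  | Var x => s x
  | Fn f ts => Fn f (map (apply_subst s) ts)
  end.

Fixpoint eval {M : Type} (I : F -> list M -> M) (v : nat -> M) (t : term) : M :=
  match t with
  | Var x => v x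
  | Fn f ts => I f (map (eval I v) ts)
  end.

Definition AI_model (h : F) {M : Type} (I : F -> list M -> M) : Prop :=
  (forall x y z : M, I h [x; I h [y; z]] = I h [I h [x; y]; z]) /\
  (forall x : M, I h [x; x] = x).

(* s =_AI t : s = t holds in every model of the AI axioms (all other symbols free) *)
Definition AI_eq (h : F) (s t : term) : Prop :=
  forall (M : Type) (I : F -> list M -> M), AI_model h I ->
  forall v : nat -> M, eval I v s = eval I v t.

Definition AI_generalization (h : F) (r s t : term) : Prop :=
  wf r /\
  exists sigma tau : nat -> term,
    substitution sigma /\ substitution tau /\
    AI_eq h (apply_subst sigma r) s /\ AI_eq h (apply_subst tau r) t.

End Terms.

Arguments Var {F}.
Arguments Fn {F}.

(* Main.v *)
Require Import Defs.
From Stdlib Require Import List.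
Import ListNotations.

Theorem lemma2 (F : Type) (ar : F -> nat) (h a b : F)
  (Hh : ar h = 2) (Ha : ar a = 0) (Hb : ar b = 0) (Hab : a <> b)
  (t1 : F) (t2 t : term F)
  (Ht1 : t1 = a \/ t1 = b)
  (Ht2 : wf F ar t2)
  (Ht : t = Fn h [Fn t1 []; t2] \/ t = Fn h [t2; Fn t1 []]) :
  ~ AI_generalization F ar h t
      (Fn h [Fn a []; Fn b []]) (Fn h [Fn b []; Fn a []]).
Proof.
  intros [_ [sg [tu [_ [_ [E1 E2]]]]]].
  destruct Ht as [-> | ->].
  - set (I := fun (f : F) (l : list F) => match l with [] => f | x :: _ => x end).
    assert (HM : AI_model F h I) by (split; intros; reflexivity).
    specialize (E1 F I HM (fun _ => a)). specialize (E2 F I HM (fun _ => a)).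
    simpl in E1, E2. congruence.
  - set (I := fun (f : F) (l : list F) => last l f).
    assert (HM : AI_model F h I) by (split; intros; reflexivity).
    specialize (E1 F I HM (fun _ => a)). specialize (E2 F I HM (fun _ => a)).
    simpl in E1, E2. congruence.
Qed.
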